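(* Let $(X,Y)\sim P_{X,Y}$ be random variables in $\{0,1\}\times\mathcal{Y}$, $\mathcal{Y}=\{1,\dots,|\mathcal{Y}|\}$ with $|\mathcal{Y}|\ge 2$. For $i\neq j\in\mathcal{Y}$ let $f_{ij}$ be the map sending $i$ and $j$ to a common new symbol $y'\notin\mathcal{Y}$ and fixing every other symbol. Then there exist $i\neq j\in\mathcal{Y}$ such that \[ I(X;Y)-I(X;f_{ij}(Y))\leq\frac{128}{|\mathcal{Y}|^3}. \]
   Context: Logarithms (and mutual informations) are natural. *)

(* Defs.v *)
From mathcomp Require Import all_boot all_order all_algebra.
From mathcomp Require Import all_classical all_reals all_analysis.
Set Implicit Arguments. Unset Strict Implicit. Unset Printing Implicit Defensive.
Import Order.TTheory GRing.Theory Num.Theory.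
Local Open Scope ring_scope.

Section Info.
Variable R : realType.

Definition is_joint_pmf (A B : finType) (P : A -> B -> R) : Prop :=
  (forall a b, 0 <= P a b) /\ \sum_(a : A) \sum_(b : B) P a b = 1.

Definition margX (A B : finType) (P : A -> B -> R) (a : A) : R :=
  \sum_(b : B) P a b.
Definition margY (A B : finType) (P : A -> B -> R) (b : B) : R :=
  \sum_(a : A) P a b.

Definition mutual_info (A B : finType) (P : A -> B -> R) : R :=
  \sum_(a : A) \sum_(b : B)
    (if P a b == 0 then 0
     else P a b * ln (P a b / (margX P a * margY P b))).

Definition push_Y (A B C : finType) (f : B -> C) (P : A -> B -> R) : A -> C -> R :=
  fun a c => \sum_(b : B | f b == c) P a b.
End Info.

Definition merge_sym (n : nat) (i j : 'I_n) (y : 'I_n) : option 'I_n :=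
  if (y == i) || (y == j) then None else Some y.

(* Main.v *)
Require Import Defs.
From mathcomp Require Import all_boot all_order all_algebra.
From mathcomp Require Import all_classical all_reals all_analysis.
From mathcomp.algebra_tactics Require Import ring lra.
Import Order.TTheory GRing.Theory Num.Theory.
Local Open Scope ring_scope.
From mathcomp Require Import zify.

Section Aux.
Variable R : realType.

Definition tm (v X s : R) := if v == 0 then 0 else v * ln (v / (X * s)).

Lemma ln_le_sub1 (t : R) : 0 < t -> ln t <= t - 1.
Proof.
move=> t0; have := expR_ge1Dx (ln t); rewrite lnK ?posrE //; lra.
Qed.

Lemma H1 (a K c : R) : 0 <= a -> 0 < K -> 0 < c ->
  (if a == 0 then 0 else a * ln (a / K)) - a * ln c <= a * (a / K / c - 1).
Proof.
move=> a0 K0 c0; have [->|an0] := eqVneq a 0; first by rewrite !mul0r subr0.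
have ap : 0 < a by rewrite lt_def an0.
rewrite -mulrBr ler_wpM2l // -ln_div ?posrE ?divr_gt0 //.
by apply: ln_le_sub1; rewrite !divr_gt0.
Qed.

Lemma alg_ineq (a b sa sb P Q : R) : 0 <= sa -> 0 <= sb -> 0 < P -> 0 < Q ->
  0 < a + b -> a = P * sa ^+ 2 -> b = Q * sb ^+ 2 ->
  a * (a * (P + Q) / (P * (a + b)) - 1) + b * (b * (P + Q) / (Q * (a + b)) - 1)
   <= (P + Q) * (sa - sb) ^+ 2.
Proof.
move=> sa0 sb0 P0 Q0 ab0 ea eb; subst a b.
set a := P * sa ^+ 2; set b := Q * sb ^+ 2.
have abn : a + b != 0 by rewrite gt_eqF.
have -> : a * (a * (P + Q) / (P * (a + b)) - 1) + b * (b * (P + Q) / (Q * (a + b)) - 1)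
   = (P * Q * (sa ^+ 2 - sb ^+ 2) ^+ 2) / (a + b).
  rewrite /a /b; field. by rewrite -/a -/b abn /= !gt_eqF.
rewrite ler_pdivrMr //.
have -> : (P + Q) * (sa - sb) ^+ 2 * (a + b) =
   P * Q * (sa ^+ 2 - sb ^+ 2) ^+ 2 + (sa - sb) ^+ 2 * (P * sa - Q * sb) ^+ 2.
  rewrite /a /b; ring.
by rewrite lerDl mulr_ge0 // sqr_ge0.
Qed.

Lemma perx (a b X P Q : R) : 0 <= a -> 0 <= b -> a + b <= X -> 0 < P -> 0 < Q ->
  tm a X P + tm b X Q - tm (a + b) X (P + Q) <=
  (P + Q) * (Num.sqrt (a / P) - Num.sqrt (b / Q)) ^+ 2.
Proof.
move=> a0 b0 abX P0 Q0.
have [ab0|abn] := eqVneq (a + b) 0.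
  have az : a = 0 by lra.
  have bz : b = 0 by lra.
  by rewrite /tm ab0 az bz eqxx !subr0 addr0 mulr_ge0 ?sqr_ge0 // addr_ge0 // ltW.
have abp : 0 < a + b by rewrite lt_def abn addr_ge0.
have Xp : 0 < X by apply: lt_le_trans abX.
set c := (a + b) / (X * (P + Q)).
have cp : 0 < c by rewrite divr_gt0 // mulr_gt0 // addr_gt0.
have -> : tm (a + b) X (P + Q) = a * ln c + b * ln c.
  by rewrite /tm (negbTE abn) mulrDl.
have e1 := @H1 a (X * P) c a0 (mulr_gt0 Xp P0) cp.
have e2 := @H1 b (X * Q) c b0 (mulr_gt0 Xp Q0) cp.
apply: (le_trans (y := a * (a / (X * P) / c - 1) + b * (b / (X * Q) / c - 1))).
  rewrite /tm; lra.
set sa := Num.sqrt (a / P); set sb := Num.sqrt (b / Q).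
have ea : a = P * sa ^+ 2.
  by rewrite sqr_sqrtr ?(divr_ge0 a0 (ltW P0)) // mulrC divfK // gt_eqF.
have eb : b = Q * sb ^+ 2.
  by rewrite sqr_sqrtr ?(divr_ge0 b0 (ltW Q0)) // mulrC divfK // gt_eqF.
have E : a * (a / (X * P) / c - 1) + b * (b / (X * Q) / c - 1) =
  a * (a * (P + Q) / (P * (a + b)) - 1) + b * (b * (P + Q) / (Q * (a + b)) - 1).
  rewrite /c; congr (_ * (_ - 1) + _ * (_ - 1)); field;
  by rewrite abn !gt_eqF ?addr_gt0.
rewrite E.
exact: (@alg_ineq a b sa sb P Q (sqrtr_ge0 _) (sqrtr_ge0 _) P0 Q0 abp ea eb).
Qed.


End Aux.
Arguments tm {R}.
Section Decomp.
Variable R : realType.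
Variable n : nat.
Variable P : bool -> 'I_n -> R.
Variables i j : 'I_n.
Hypothesis ij : i != j.

Lemma sum_ij (F : 'I_n -> R) : \sum_(y | (y == i) || (y == j)) F y = F i + F j.
Proof.
rewrite (bigD1 i) ?eqxx //=; congr (_ + _).
rewrite (eq_bigl (fun y => y == j)) ?big_pred1_eq // => y.
by case: (eqVneq y i) => [->|]; rewrite ?(negbTE ij) ?andbF ?andbT //= eq_sym.
Qed.

Lemma sum_diff (F : 'I_n -> R) :
  \sum_y F y - \sum_y (if (y == i) || (y == j) then 0 else F y) = F i + F j.
Proof.
rewrite -sumrB -sum_ij [RHS]big_mkcond /=; apply: eq_bigr => y _.
by case: ifP => _; rewrite ?subr0 ?subrr.
Qed.

Lemma sum_option (G : option 'I_n -> R) :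
  \sum_(c : option 'I_n) G c = G None + \sum_y G (Some y).
Proof.
rewrite (bigD1 None) //=; congr (_ + _).
rewrite (reindex_omap Some id) /=; last by case.
by apply: eq_bigl => y; rewrite eqxx.
Qed.

Let f := @merge_sym n i j.
Let Q := push_Y f P.

Lemma Q_None a : Q a None = P a i + P a j.
Proof.
rewrite /Q /push_Y -sum_ij; apply: eq_bigl => b.
by rewrite /f /merge_sym; case: ifP.
Qed.

Lemma Q_Some a y : Q a (Some y) = if (y == i) || (y == j) then 0 else P a y.
Proof.
rewrite /Q /push_Y /f /merge_sym; case: ifP => hy.
  rewrite big_pred0 // => b; case: ifP => // hb; apply/negbTE/eqP => -[eb].
  by rewrite eb hy in hb.
rewrite (eq_bigl (fun b => b == y)) ?big_pred1_eq // => b.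
case: (eqVneq b y) => [->|hb]; first by rewrite hy eqxx.
case: ifP => //= _; apply/negbTE/eqP => -[eb]; by rewrite eb eqxx in hb.
Qed.

Lemma margX_Q a : margX Q a = margX P a.
Proof.
rewrite /margX /Q /push_Y (partition_big f predT) //=.
Qed.

Lemma margY_None : margY Q None = margY P i + margY P j.
Proof. by rewrite /margY -big_split; apply: eq_bigr => a _; rewrite Q_None. Qed.

Lemma margY_Some y :
  margY Q (Some y) = if (y == i) || (y == j) then 0 else margY P y.
Proof.
rewrite /margY; case: ifP => hy; last by apply: eq_bigr => a _; rewrite Q_Some hy.
by rewrite big1 // => a _; rewrite Q_Some hy.
Qed.

Lemma decomp :
  mutual_info P - mutual_info Q =
  \sum_a (tm (P a i) (margX P a) (margY P i) + tm (P a j) (margX P a) (margY P j)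
          - tm (P a i + P a j) (margX P a) (margY P i + margY P j)).
Proof.
rewrite /mutual_info -sumrB; apply: eq_bigr => a _.
rewrite sum_option Q_None margY_None margX_Q.
have -> : \sum_y (if Q a (Some y) == 0 then 0
      else Q a (Some y) * ln (Q a (Some y) / (margX P a * margY Q (Some y))))
   = \sum_y (if (y == i) || (y == j) then 0 else tm (P a y) (margX P a) (margY P y)).
  apply: eq_bigr => y _; rewrite Q_Some margY_Some /tm.
  by case: ((y == i) || (y == j)); rewrite ?eqxx.
rewrite opprD addrA.
have := sum_diff (fun y => tm (P a y) (margX P a) (margY P y)).
rewrite /tm => <-; lra.
Qed.

End Decomp.
Section Pig.
Variable R : realType.

Lemma bin_bounds (v : R) (m' : nat) : 0 <= v <= (m'.+1)%:R ->
  (minn (Num.truncn v) m')%:R <= v <= (minn (Num.truncn v) m')%:R + 1.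
Proof.
move=> /andP[v0 vm].
have /andP[t1 t2] := truncn_itv v0.
case: (leqP (Num.truncn v) m') => h.
  rewrite t1 /=; rewrite -natr1 in t2; exact: ltW.

have : (m'%:R : R) <= (Num.truncn v)%:R by rewrite ler_nat ltnW.
rewrite -natr1 in vm; lra.
Qed.

Lemma pigeon (T : finType) (S : {set T}) (m : nat) (w : T -> R) :
  (0 < m)%N -> (m < #|S|)%N -> (forall y, y \in S -> 0 <= w y <= m%:R) ->
  exists i j, [/\ i \in S, j \in S, i != j & `|w i - w j| <= 1].
Proof.
case: m => // m' _ mS wb.
apply: contrapT => H.
pose g (y : T) : 'I_m'.+1 := inord (minn (Num.truncn (w y)) m').
have : {in S &, injective g}.
  move=> x y xS yS gxy; case: (eqVneq x y) => // nxy; exfalso; apply: H.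
  exists x, y; split => //.
  have := congr1 val gxy; rewrite /g /=. rewrite !inordK ?ltnS ?geq_minr // => e.
  have := @bin_bounds (w x) m' (wb x xS); have := @bin_bounds (w y) m' (wb y yS); rewrite e.
  move=> /andP[a1 a2] /andP[b1 b2]; rewrite ler_norml; apply/andP; split; lra.
move/leq_card_in; rewrite card_ord => h.
by move: (leq_ltn_trans h mS); rewrite ltnn.
Qed.

Lemma geom (xi yi xj yj : R) : 0 <= xi -> 0 <= yi -> 0 <= xj -> 0 <= yj ->
  xi ^+ 2 + yi ^+ 2 = 1 -> xj ^+ 2 + yj ^+ 2 = 1 ->
  (xi - xj) ^+ 2 + (yi - yj) ^+ 2 <= ((xi - yi) - (xj - yj)) ^+ 2.
Proof.
move=> xi0 yi0 xj0 yj0 ei ej.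
suff : (xi - xj) * (yi - yj) <= 0 by move=> h; nra.
case: (lerP xj xi) => h.
  have h2 : yi <= yj.
    rewrite leNgt; apply/negP => h3.
    have : yj ^+ 2 < yi ^+ 2 by rewrite ltr_pXn2r // ?nnegrE.
    have : xj ^+ 2 <= xi ^+ 2 by rewrite ler_pXn2r // ?nnegrE.
    lra.
  nra.
have h2 : yj <= yi.
  rewrite leNgt; apply/negP => h3.
  have : yi ^+ 2 < yj ^+ 2 by rewrite ltr_pXn2r // ?nnegrE.
  have : xi ^+ 2 < xj ^+ 2 by rewrite ltr_pXn2r // ?nnegrE.
  lra.
nra.
Qed.
End Pig.

Lemma le_margX (R : realType) (n : nat) (P : bool -> 'I_n -> R) (i j : 'I_n) a :
  i != j -> (forall a b, 0 <= P a b) -> P a i + P a j <= margX P a.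
Proof.
move=> ij P0; rewrite /margX (bigID (fun y => (y == i) || (y == j))) /=.
by rewrite (@sum_ij R n i j ij) lerDl sumr_ge0.
Qed.

Theorem theorem5 (R : realType) (n : nat) (hn : (2 <= n)%N)
  (P : bool -> 'I_n -> R) (hP : is_joint_pmf P) :
  exists i j : 'I_n, i != j /\
    mutual_info P - mutual_info (push_Y (@merge_sym n i j) P)
      <= 128 / (n%:R ^+ 3).
Proof.
case: hP => P0 Psum.
have pE y : margY P y = P true y + P false y by rewrite /margY big_bool.
have p0 y : 0 <= margY P y by rewrite pE addr_ge0.
have psum : \sum_y margY P y = 1 by rewrite /margY exchange_big.
have npos : (0 : R) < n%:R by rewrite ltr0n; lia.
have rhs0 : (0 : R) <= 128 / n%:R ^+ 3 by rewrite divr_ge0 // exprn_ge0 // ltW.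
case: (pselect (exists y, margY P y = 0)) => [[y0 hy0] | hnz].
  have : (0 < #|[set~ y0]|)%N by rewrite cardsC1 card_ord; lia.
  case/card_gt0P => j; rewrite in_setC1 => hj.
  exists y0, j; split; first by rewrite eq_sym.
  rewrite decomp; last by rewrite eq_sym.
  have Pz a : P a y0 = 0.
    have := P0 true y0; have := P0 false y0; rewrite pE in hy0; case: a; lra.
  rewrite big1 // => a _.
  by rewrite Pz hy0 !add0r /tm eqxx add0r subrr.
have ppos y : 0 < margY P y.
  by rewrite lt_def p0 andbT; apply/eqP => h; apply: hnz; exists y.
set S := [set y | margY P y <= 4 / n%:R].
have hB : (4 * #|~: S| <= n)%N.
  have h1 : \sum_(y in ~: S) margY P y <= 1.
    rewrite -psum [X in _ <= X](bigID (fun y => y \in ~: S)) /= lerDl sumr_ge0 //.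
  have h2 : (#|~: S|%:R : R) * (4 / n%:R) <= \sum_(y in ~: S) margY P y.
    rewrite -sum1_card natr_sum mulr_suml; apply: ler_sum => y.
    rewrite !inE -ltNge mul1r => h; exact: ltW.
  have := le_trans h2 h1; rewrite mulrA ler_pdivrMr // mul1r => h.
  by rewrite -(ler_nat R) natrM mulrC.
have hS := cardsC S; rewrite card_ord in hS.
have hm0 : (0 < #|S|.-1)%N by lia.
have hms : (#|S|.-1 < #|S|)%N by lia.
have hnm : (n <= 2 * #|S|.-1)%N by lia.
set m := #|S|.-1 in hm0 hms hnm.
pose xs y := Num.sqrt (P true y / margY P y).
pose ys y := Num.sqrt (P false y / margY P y).
have exy y : xs y ^+ 2 + ys y ^+ 2 = 1.
  rewrite /xs /ys !sqr_sqrtr ?divr_ge0 // -mulrDl -pE divff // gt_eqF //.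
pose z y := xs y - ys y.
have zb y : -1 <= z y <= 1.
  have := exy y; have := sqrtr_ge0 (P true y / margY P y).
  have := sqrtr_ge0 (P false y / margY P y); rewrite /z -/(xs y) -/(ys y).
  move=> h1 h2 h3; apply/andP; split; nra.
pose w y := (z y + 1) * m%:R / 2.
have wb y : y \in S -> 0 <= w y <= m%:R.
  move=> _; have := zb y; have : (0 : R) <= m%:R by [].
  rewrite /w => h1 /andP[h2 h3]; apply/andP; split; nra.
have [i [j [iS jS ij hw]]] := @pigeon R _ S m w hm0 hms wb.
exists i, j; split => //.
rewrite decomp //.
set pi := margY P i; set pj := margY P j.
apply: (le_trans (y := \sum_a (pi + pj) * (Num.sqrt (P a i / pi) - Num.sqrt (P a j / pj)) ^+ 2)).
  apply: ler_sum => a _; apply: perx => //; first exact: le_margX.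
    exact: ppos.
  exact: ppos.
rewrite -mulr_sumr big_bool /=.
have hg := @geom R _ _ _ _ (sqrtr_ge0 (P true i / pi)) (sqrtr_ge0 (P false i / pi))
   (sqrtr_ge0 (P true j / pj)) (sqrtr_ge0 (P false j / pj)) (exy i) (exy j).
have mpos : (0 : R) < m%:R by rewrite ltr0n.
have hz : (z i - z j) ^+ 2 <= 4 / m%:R ^+ 2.
  have -> : z i - z j = (w i - w j) * 2 / m%:R.
    rewrite /w; field; rewrite gt_eqF //.
  move: hw; rewrite ler_norml => /andP[h1 h2].
  have : (w i - w j) ^+ 2 <= 1 by nra.
  move=> h3; rewrite expr_div_n ler_pdivrMr ?exprn_gt0 // mulrC divfK ?gt_eqF ?exprn_gt0 //.
  nra.
move: iS jS; rewrite !inE -/pi -/pj => hpi hpj.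
have hD : 0 <= (Num.sqrt (P true i / pi) - Num.sqrt (P true j / pj)) ^+ 2 +
    (Num.sqrt (P false i / pi) - Num.sqrt (P false j / pj)) ^+ 2
  by rewrite addr_ge0 // sqr_ge0.
apply: (le_trans (y := (8 / n%:R) * (4 / m%:R ^+ 2))).
  apply: ler_pM; [exact: addr_ge0 (p0 i) (p0 j) | exact: hD | | exact: le_trans hg hz].
  have -> : (8 / n%:R : R) = 4 / n%:R + 4 / n%:R by field; rewrite gt_eqF.
  exact: lerD.
have hnm' : (n%:R : R) ^+ 2 <= 4 * m%:R ^+ 2.
  have : (n%:R : R) <= 2 * m%:R by rewrite -natrM ler_nat.
  move=> h; nra.
have -> : (8 / n%:R * (4 / m%:R ^+ 2) : R) = 128 / n%:R ^+ 3 * (n%:R ^+ 2 / (4 * m%:R ^+ 2)).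
  field; rewrite !gt_eqF //.
apply: ler_piMr => //.
by rewrite ler_pdivrMr ?mul1r // mulr_gt0 // exprn_gt0.
Qed.
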